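(* Let $c>0$, $\epsilon>0$, $\delta\in(0,1)$, let $N\ge1$ be an integer, let $m\ge2$ be an integer and $\hat v\ge0$. Put $L=\ln(3N/\delta)$, $\kappa=\frac13+\frac1{2L}$, $$\epsilon^{\hat v}=\frac{2c^2L}{3m}+\sqrt{\kappa\Big(\frac{c^2L}{m-1}\Big)^2+\frac{2c^2\hat vL}{m}},\qquad \epsilon^{\hat B}=\frac{cL}{3m}+\sqrt{\frac{2(\hat v+\epsilon^{\hat v})L}{m}}.$$ If $\epsilon^{\hat B}\le\epsilon$, then $m>\Big(\frac13+\sqrt{\frac{4+2\sqrt3}{3}}\Big)\cdot\frac{cL}{\epsilon}$.
   Context: In the paper, $N=|\mathcal{I}|$ is the number of (player, pure profile) utility indices, $m$ is the number of samples of a given utility, $\hat v$ is their sample variance, $c$ bounds the range of sampled utilities, and $\epsilon^{\hat B}$ is the empirical Bennett deviation bound for the empirical mean. *)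

(* Defs.v *)
From Stdlib Require Import Reals.
Open Scope R_scope.

Definition Lval (N : nat) (delta : R) : R := ln (3 * INR N / delta).

Definition kappa (N : nat) (delta : R) : R := 1/3 + 1 / (2 * Lval N delta).

Definition eps_v (c delta vhat : R) (N m : nat) : R :=
  let L := Lval N delta in
  2 * c^2 * L / (3 * INR m)
  + sqrt (kappa N delta * (c^2 * L / (INR m - 1))^2 + 2 * c^2 * vhat * L / INR m).

Definition eps_B (c delta vhat : R) (N m : nat) : R :=
  let L := Lval N delta in
  c * L / (3 * INR m) + sqrt (2 * (vhat + eps_v c delta vhat N m) * L / INR m).

(* Main.v *)
Require Import Defs.
From Stdlib Require Import Reals Lra Psatz.
Open Scope R_scope.

Lemma sq_lt (u t : R) : 0 <= t -> u * u < t * t -> u < t.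
Proof. intros. nra. Qed.

Theorem lemma7 (c eps delta vhat : R) (N m : nat) :
  0 < c -> 0 < eps -> 0 < delta < 1 -> (1 <= N)%nat -> (2 <= m)%nat -> 0 <= vhat ->
  eps_B c delta vhat N m <= eps ->
  INR m > (1/3 + sqrt ((4 + 2 * sqrt 3) / 3)) * (c * Lval N delta / eps).
Proof.
  intros Hc He [Hd0 Hd1] HN Hm Hv HB.
  unfold eps_B, eps_v, kappa in HB; cbv zeta in HB.
  assert (HNr : 1 <= INR N) by (apply (le_INR 1); exact HN).
  assert (HMr : 2 <= INR m) by (apply (le_INR 2); exact Hm).
  assert (HL : 0 < Lval N delta).
  { unfold Lval. rewrite <- ln_1. apply ln_increasing; [lra|].
    apply (Rmult_lt_reg_r delta); [lra|]. unfold Rdiv.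
    rewrite Rmult_assoc, Rinv_l by lra. nra. }
  set (L := Lval N delta) in *.
  set (M := INR m) in *.
  set (r := sqrt 3).
  assert (Hr : r * r = 3) by (apply sqrt_sqrt; lra).
  assert (Hr0 : 0 < r) by (apply sqrt_lt_R0; lra).
  set (s := sqrt ((4 + 2 * r) / 3)).
  assert (Hs : s * s = (4 + 2 * r) / 3) by (apply sqrt_sqrt; nra).
  assert (Hs0 : 0 <= s) by apply sqrt_pos.
  set (A := c * L / M).
  assert (HA : 0 < A) by (unfold A; apply Rdiv_lt_0_compat; nra).
  set (q := c ^ 2 * L / M) in *.
  assert (Hq : q = c * A). { unfold q, A. field. lra. }
  set (q' := c ^ 2 * L / (M - 1)) in *.
  assert (Hqq : q < q').
  { unfold q, q'. apply Rmult_lt_compat_l; [apply Rmult_lt_0_compat; [apply pow_lt|]; lra|].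
    apply Rinv_lt_contravar; nra. }
  assert (Hk : 1/3 < 1/3 + 1 / (2 * L)).
  { assert (0 < 1 / (2 * L)) by (apply Rdiv_lt_0_compat; lra). lra. }
  set (k := 1/3 + 1 / (2 * L)) in *.
  set (w := 2 * c ^ 2 * vhat * L / M) in *.
  assert (Hw : 0 <= w).
  { unfold w. apply Rmult_le_pos; [|left; apply Rinv_0_lt_compat; lra].
    assert (0 < c^2) by (apply pow_lt; lra). apply Rmult_le_pos; [apply Rmult_le_pos|]; nra. }
  set (t := sqrt (k * q' ^ 2 + w)) in *.
  assert (Ht : q * r / 3 < t).
  { apply sq_lt; [apply sqrt_pos|]. unfold t. rewrite sqrt_sqrt by nra.
    assert (0 < q) by (rewrite Hq; nra).
    assert (q * q < q' * q') by nra.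
    replace (q * r / 3 * (q * r / 3)) with (q * q * (r * r) / 9) by field.
    rewrite Hr. nra. }
  set (ev := 2 * c ^ 2 * L / (3 * M) + t) in *.
  assert (Hev : q * (2 + r) / 3 < ev).
  { unfold ev. replace (2 * c ^ 2 * L / (3 * M)) with (2 * q / 3)
      by (unfold q; field; lra). lra. }
  set (S := sqrt (2 * (vhat + ev) * L / M)) in *.
  assert (HS : A * s < S).
  { apply sq_lt; [apply sqrt_pos|]. unfold S. rewrite sqrt_sqrt.
    2:{ apply Rmult_le_pos; [|left; apply Rinv_0_lt_compat; lra].
        assert (0 < q) by (rewrite Hq; nra). assert (0 < vhat + ev) by nra. apply Rmult_le_pos; lra. }
    replace (A * s * (A * s)) with (A * A * (s * s)) by ring. rewrite Hs.
    replace (2 * (vhat + ev) * L / M) with (2 * (vhat + ev) * (A / c)) by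
      (unfold A; field; lra).
    assert (HAc : A * A * ((4 + 2 * r) / 3) = 2 * (q * (2 + r) / 3) * (A / c)).
    { rewrite Hq. field. lra. }
    rewrite HAc.
    assert (0 < A / c) by (apply Rdiv_lt_0_compat; lra).
    apply Rmult_lt_compat_r; [lra|]. lra. }
  assert (HAe : A * (1/3 + s) < eps).
  { replace (c * L / (3 * M)) with (A / 3) in HB by (unfold A; field; lra). rewrite Rmult_plus_distr_l. lra. }
  fold r s.
  unfold Rgt.
  assert (HcL : c * L = M * A) by (unfold A; field; lra).
  rewrite HcL.
  apply (Rmult_lt_reg_r eps); [lra|].
  replace ((1/3 + s) * (M * A / eps) * eps) with (M * (A * (1/3 + s))) by (field; lra).
  apply Rmult_lt_compat_l; lra.
Qed.
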